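(* Let $\tau$ be an infinite cardinal, let $(G,X,\alpha)$ be a $G$-space, and suppose $G$ is a (topological) subgroup of a product $\Pi=\prod\{G_s:s\in S\}$ of topological groups. Suppose that either (a) the action $\alpha$ is transitive and $\chi(X)\le\tau$, or (b) $(G,X,\alpha)$ is $G$-Tychonoff, $\mathcal U$ is an equiuniformity on $X$ and $w(\mathcal U)\le\tau$. Then there exist $S'\subset S$ with $|S'|\le\tau$ and an action $\gamma:\mathrm{pr}_{S'}(G)\times X\to X$, where $\mathrm{pr}_{S'}:\Pi\to\prod\{G_s:s\in S'\}$ is the projection and $\mathrm{pr}_{S'}(G)$ carries the subspace topology, such that $(\mathrm{pr}_{S'}(G),X,\gamma)$ is a $G$-space with transitive action $\gamma$ in case (a), respectively $(\mathrm{pr}_{S'}(G),X,\gamma)$ is a $G$-space for which $\mathcal U$ is an equiuniformity in case (b); and $(\mathrm{pr}_{S'}|_G,\mathrm{id}):(G,X,\alpha)\to(\mathrm{pr}_{S'}(G),X,\gamma)$ is an equivariant pair of maps.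
   Context: All spaces are Tychonoff and all maps continuous. A $G$-space $(G,X,\alpha)$ is a topological group $G$ with a continuous action $\alpha:G\times X\to X$; it is transitive if $Gx=X$ for $x\in X$. An equivariant pair of maps $(\varphi,\mathrm{id}):(G,X,\alpha)\to(H,X,\gamma)$ is a continuous homomorphism $\varphi:G\to H$ with $\alpha(g,x)=\gamma(\varphi(g),x)$ for all $g,x$. Uniformities are given by families of open covers; $w(\mathcal U)$ is the minimal cardinality of a base of $\mathcal U$. $\mathcal U$ is an equiuniformity for $(G,X,\alpha)$ if it is saturated ($gu\in\mathcal U$ for all $u\in\mathcal U$, $g\in G$) and bounded (for every $u\in\mathcal U$ there are an open neighborhood $O$ of the unit of $G$ and $v\in\mathcal U$ with $\{OV:V\in v\}$ refining $u$). $(G,X,\alpha)$ is $G$-Tychonoff if there is a compactification $bX$ of $X$ with a continuous $G$-action extending $\alpha$. $\chi(X)$ is the character of $X$. *)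

(* Defs.v *)
From HB Require Import structures.
From mathcomp Require Import all_boot all_order all_algebra.
From mathcomp Require Import all_classical all_reals topology function_spaces normedtype.
From mathcomp Require Import Rstruct Rstruct_topology.

Set Implicit Arguments.
Unset Strict Implicit.
Unset Printing Implicit Defensive.

Import Order.TTheory GRing.Theory Num.Theory.
Local Open Scope classical_set_scope.
Local Open Scope card_scope.

(** * Topological groups (Hausdorffness is imposed separately as Tychonoff) *)
Record topGroup : Type := TopGroup {
  tg_car :> topologicalType;
  tg_one : tg_car;
  tg_mul : tg_car -> tg_car -> tg_car;
  tg_inv : tg_car -> tg_car;
  tg_mulA : forall x y z, tg_mul x (tg_mul y z) = tg_mul (tg_mul x y) z;
  tg_mul1g : forall x, tg_mul tg_one x = x;
  tg_mulVg : forall x, tg_mul (tg_inv x) x = tg_one;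
  tg_mul_cont : continuous (fun p : tg_car * tg_car => tg_mul p.1 p.2);
  tg_inv_cont : continuous tg_inv }.

Definition tychonoff_space (X : topologicalType) : Prop :=
  accessible_space X /\
  forall (a : X) (B : set X), closed B -> ~ B a ->
    exists f : X -> Rdefinitions.R,
      continuous f /\ f a = 0%R /\ (forall b, B b -> f b = 1%R).

Notation PG K := (prod_topology (fun i => tg_car (K i))).

Section Products.
Variables (I : Type) (K : I -> topGroup).

Definition pone : PG K := fun i => tg_one (K i).
Definition pmul (a b : PG K) : PG K :=
  fun i => tg_mul (a i) (b i).
Definition pinv (a : PG K) : PG K :=
  fun i => tg_inv (a i).

(** [G] is a subgroup of the product; it carries the subspace topology. *)
Definition subgroup (G : set (PG K)) : Prop :=
  [/\ G pone, (forall a b, G a -> G b -> G (pmul a b))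
    & (forall a, G a -> G (pinv a))].

(** [(G, X, alpha)] is a G-space: [G] a (topological) subgroup of the product,
    [alpha : G x X -> X] a continuous action ([alpha] is given as a total
    function; only its values on [G] matter). *)
Definition Gspace (G : set (PG K)) (X : topologicalType)
    (alpha : PG K -> X -> X) : Prop :=
  [/\ subgroup G,
      {within G `*` [set: X], continuous (fun p : PG K * X => alpha p.1 p.2)},
      (forall x, alpha pone x = x)
    & (forall g h x, G g -> G h -> alpha g (alpha h x) = alpha (pmul g h) x)].

Definition transitive_action (G : set (PG K)) (X : Type)
    (alpha : PG K -> X -> X) : Prop :=
  forall x y : X, exists g, G g /\ alpha g x = y.

(** * Uniformities given by families of open covers *)
Definition open_cover (X : topologicalType) (u : set (set X)) : Prop :=
  (forall U, u U -> open U) /\ \bigcup_(U in u) U = [set: X].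

Definition refines (X : Type) (u v : set (set X)) : Prop :=
  forall U, u U -> exists2 V, v V & U `<=` V.

Definition star (X : Type) (A : set X) (u : set (set X)) : set X :=
  \bigcup_(U in [set U | u U /\ U `&` A !=set0]) U.

Definition uniformity_on (X : topologicalType) (UU : set (set (set X))) : Prop :=
  [/\ UU !=set0,
      (forall u, UU u -> open_cover u),
      (forall u v, UU u -> open_cover v -> refines u v -> UU v),
      (forall u v, UU u -> UU v -> exists2 w, UU w & refines w u /\ refines w v)
    & (forall u, UU u -> exists2 v, UU v & refines [set star V v | V in v] u)] /\
  (forall (x : X) (O : set X), nbhs x O ->
     exists2 u, UU u & star [set x] u `<=` O).

Definition weight_le (X : Type) (UU : set (set (set X))) (tau : Type) : Prop :=
  exists B : set (set (set X)),
    [/\ B `<=` UU, B #<= [set: tau] & forall u, UU u -> exists2 v, B v & refines v u].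

Definition character_le (X : topologicalType) (tau : Type) : Prop :=
  forall x : X, exists B : set (set X),
    [/\ B #<= [set: tau], (forall U, B U -> open U /\ U x)
      & forall V, nbhs x V -> exists2 U, B U & U `<=` V].

Definition saturated (G : set (PG K)) (X : Type)
    (alpha : PG K -> X -> X) (UU : set (set (set X))) : Prop :=
  forall u g, UU u -> G g -> UU [set alpha g @` U | U in u].

(** O V = { alpha g y : g in O, y in V } with O = G `&` W an open
    neighbourhood of the unit in (the subspace) G. *)
Definition bounded (G : set (PG K)) (X : Type)
    (alpha : PG K -> X -> X) (UU : set (set (set X))) : Prop :=
  forall u, UU u -> exists W : set (PG K),
    [/\ open W, W pone &
      exists2 v, UU v &
        refines [set [set z | exists g y, [/\ (G `&` W) g, V y & z = alpha g y]]
                | V in v] u].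

Definition equiuniformity (G : set (PG K)) (X : topologicalType)
    (alpha : PG K -> X -> X) (UU : set (set (set X))) : Prop :=
  [/\ uniformity_on UU, saturated G alpha UU & bounded G alpha UU].

Definition embedding (X Y : topologicalType) (e : X -> Y) : Prop :=
  [/\ continuous e, injective e &
      forall U : set X, open U -> exists2 V : set Y, open V & e @` U = V `&` range e].

Definition G_tychonoff (G : set (PG K)) (X : topologicalType)
    (alpha : PG K -> X -> X) : Prop :=
  exists (bX : topologicalType) (e : X -> bX) (beta : PG K -> bX -> bX),
    [/\ compact [set: bX], hausdorff_space bX, embedding e & dense (range e)] /\
    Gspace G beta /\ (forall g x, G g -> beta g (e x) = e (alpha g x)).

End Products.

Definition equivariant_pair (I J : Type) (K : I -> topGroup) (L : J -> topGroup)
    (G : set (PG K)) (H : set (PG L)) (X : Type)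
    (alpha : PG K -> X -> X) (gamma : PG L -> X -> X)
    (phi : PG K -> PG L) : Prop :=
  [/\ {within G, continuous phi},
      (forall g, G g -> H (phi g)),
      (forall g h, G g -> G h -> phi (pmul g h) = pmul (phi g) (phi h))
    & (forall g x, G g -> alpha g x = gamma (phi g) x)].

Definition restr (S : Type) (Gs : S -> topGroup) (S' : set S) :
  {s | S' s} -> topGroup := fun i => Gs (proj1_sig i).

Arguments restr {S} Gs S' _.

Definition prS (S : Type) (Gs : S -> topGroup) (S' : set S)
  (g : PG Gs) : PG (restr Gs S') :=
  fun i => g (proj1_sig i).

Arguments prS {S} Gs S' g _.

(* Main.v *)
Require Import Defs.
From HB Require Import structures.
From mathcomp Require Import all_boot all_order all_algebra.
From mathcomp Require Import all_classical all_reals topology function_spaces normedtype.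
From mathcomp Require Import Rstruct Rstruct_topology.
From Stdlib Require List.
Local Open Scope classical_set_scope.
Local Open Scope card_scope.
Set Implicit Arguments.
Unset Strict Implicit.
Unset Printing Implicit Defensive.

Section ProdTop.
Variables (I : Type) (K : I -> topologicalType).
Definition basic (l : seq {i : I & set (K i)}) : set (prod_topology K) :=
  [set f | forall p, List.In p l -> projT2 p (f (projT1 p))].

Lemma seq_basic (s : seq (set (prod_topology K))) :
  (forall E, E \in s -> exists i, exists2 O : set (K i), open O & E = [set g | O (g i)]) ->
  exists l : seq {i : I & set (K i)},
    (forall p, List.In p l -> open (projT2 p)) /\
    basic l = [set g | forall E, E \in s -> E g].
Proof.
elim: s => [|E s IH] H.
  exists [::]; split => //; apply/seteqP; split => g //= _ E.
  by [].
have [l [lo lE]] : exists l : seq {i : I & set (K i)},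
    (forall p, List.In p l -> open (projT2 p)) /\
    basic l = [set g | forall E, E \in s -> E g].
  by apply: IH => E' E's; apply: H; rewrite inE E's orbT.
have [i [O oO EO]] := H E (mem_head _ _).
exists (existT _ i O :: l); split.
  by move=> p /= [<-|/lo].
apply/seteqP; split => g /=.
  move=> Hg E'; rewrite inE => /orP[/eqP ->|E's].
    by rewrite EO; apply: (Hg (existT _ i O)); left.
  have : basic l g by move=> p lp; apply: Hg; right.
  by rewrite lE; apply.
move=> Hg p [<-|lp] /=.
  by have := Hg E (mem_head _ _); rewrite EO.
have : [set g | forall E, E \in s -> E g] g.
  by move=> E' E's; apply: Hg; rewrite inE E's orbT.
by rewrite -lE; apply.
Qed.

Lemma prod_nbhs_basic (f : prod_topology K) (W : set (prod_topology K)) :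
  nbhs f W -> exists l : seq {i : I & set (K i)},
    (forall p, List.In p l -> open (projT2 p) /\ projT2 p (f (projT1 p))) /\ basic l `<=` W.
Proof.
rewrite nbhsE /=.
move=> [_ [[B sB <-] [C BC Ct] sUBA]].
have /sB [D sD IDeC] := BC.
have [l [lo lE]] : exists l : seq {i : I & set (K i)},
    (forall p, List.In p l -> open (projT2 p)) /\
    basic l = [set g | forall E, E \in (finmap.enum_fset D) -> E g].
  apply: seq_basic.
  move=> E ED; have := sD E ED; move/set_mem => -[i _ [O oO <-]].
  by exists i; exists O.
have bf : basic l f.
  rewrite lE => E ED; move: Ct; rewrite -IDeC => Ct. exact: Ct E ED.
exists l; split.
  by move=> p lp; split; [exact: lo| exact: bf].
move=> g; rewrite lE => Hg; apply: sUBA; exists C => //.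
rewrite -IDeC; exact: (fun E ED => Hg E ED).
Qed.

Lemma proj_nbhs (f : prod_topology K) i (O : set (K i)) :
  open O -> O (f i) -> nbhs f [set g : prod_topology K | O (g i)].
Proof.
move=> oO Ofi.
have H := (@cvg_sup _ I (fun i => Topological.class (initial_topology (fun f : (forall i, K i) => f i))) (nbhs f) f _).1 (@cvg_id _ _) i.
apply: H.
apply: open_nbhs_nbhs; split => //.
by exists O.
Qed.

Lemma nbhs_basic_pre (Y : topologicalType) (h : Y -> prod_topology K) (y : Y)
    (l : seq {i : I & set (K i)}) :
  (forall p, List.In p l -> nbhs y [set z | projT2 p (h z (projT1 p))]) ->
  nbhs y (h @^-1` basic l).
Proof.
elim: l => [|p l IH] H.
  by apply: filterS filterT => z _ p [].
have Hn : nbhs y ([set z | projT2 p (h z (projT1 p))] `&` (h @^-1` basic l)).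
  by apply: filterI; [exact: H p (or_introl erefl)|exact: IH (fun q lq => H q (or_intror lq))].
move: Hn; apply: filterS => z [Hp Hl] q /= [<-|lq] //.
exact: Hl.
Qed.

Lemma basic_nbhs (f : prod_topology K) (l : seq {i : I & set (K i)}) :
  (forall p, List.In p l -> open (projT2 p) /\ projT2 p (f (projT1 p))) ->
  nbhs f (basic l).
Proof.
move=> H; apply: (@nbhs_basic_pre (prod_topology K) id f l) => p lp.
by have [o pf] := H p lp; apply: proj_nbhs.
Qed.

Lemma basic_open (l : seq {i : I & set (K i)}) :
  (forall p, List.In p l -> open (projT2 p)) -> open (basic l).
Proof.
move=> H; rewrite openE => f bf; apply: basic_nbhs => p lp; split.
  exact: H.
exact: bf.
Qed.

Lemma continuous_into_prod (Y : topologicalType) (h : Y -> prod_topology K) :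
  (forall i, continuous (fun y => h y i)) -> continuous h.
Proof.
move=> hc y W /prod_nbhs_basic [l [lH lW]].
apply: (@filterS _ _ _ (h @^-1` basic l)); first by move=> z /lW.
apply: nbhs_basic_pre => p lp.
have [o pf] := lH p lp.
apply: (hc (projT1 p) y); exact: open_nbhs_nbhs.
Qed.

Lemma proj_cont i : continuous (fun f : prod_topology K => f i).
Proof.
move=> f O /=; rewrite nbhsE => -[B [oB Bf] BO].
apply: (@filterS _ _ _ [set g : prod_topology K | B (g i)]); first by move=> g /BO.
exact: proj_nbhs.
Qed.
End ProdTop.


Lemma cont_pairl (A B C : topologicalType) (f : A * B -> C) (b : B) :
  continuous f -> continuous (fun a => f (a, b)).
Proof.
move=> fc a W /= nW; have [[P Q] /= [nP nQ] PQ] := fc (a, b) W nW.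
apply: filterS nP => x Px; exact: (PQ (x, b) (conj Px (nbhs_singleton nQ))).
Qed.

Lemma cont_pairr (A B C : topologicalType) (f : A * B -> C) (a : A) :
  continuous f -> continuous (fun b => f (a, b)).
Proof.
move=> fc b W /= nW; have [[P Q] /= [nP nQ] PQ] := fc (a, b) W nW.
apply: filterS nQ => x Qx; exact: (PQ (a, x) (conj (nbhs_singleton nP) Qx)).
Qed.

Section TG.
Variable K : topGroup.
Local Notation "x * y" := (tg_mul x y).
Local Notation "x ^-1" := (tg_inv x).
Local Notation one := (tg_one K).

Lemma tg_mulgV (x : K) : x * x^-1 = one.
Proof.
have e1 : x * x^-1 = (x^-1)^-1 * (x^-1 * (x * x^-1)).
  by rewrite tg_mulA tg_mulVg tg_mul1g.
by rewrite e1 (tg_mulA (x^-1) x) tg_mulVg tg_mul1g tg_mulVg.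
Qed.

Lemma tg_mulg1 (x : K) : x * one = x.
Proof. by rewrite -(tg_mulVg x) tg_mulA tg_mulgV tg_mul1g. Qed.

Lemma tg_mulr_cont (c : K) : continuous (fun x : K => x * c).
Proof. have := @cont_pairl _ _ _ _ c (@tg_mul_cont K); exact. Qed.

Lemma tg_mull_cont (c : K) : continuous (fun x : K => c * x).
Proof. have := @cont_pairr _ _ _ _ c (@tg_mul_cont K); exact. Qed.
End TG.

Section PGroup.
Variables (I : Type) (K : I -> topGroup).

Lemma pmulA (a b c : PG K) : pmul a (pmul b c) = pmul (pmul a b) c.
Proof. by apply: functional_extensionality_dep => i; rewrite /pmul tg_mulA. Qed.
Lemma pmul1g (a : PG K) : pmul (pone K) a = a.
Proof. by apply: functional_extensionality_dep => i; rewrite /pmul tg_mul1g. Qed.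
Lemma pmulg1 (a : PG K) : pmul a (pone K) = a.
Proof. by apply: functional_extensionality_dep => i; rewrite /pmul tg_mulg1. Qed.
Lemma pmulVg (a : PG K) : pmul (Defs.pinv a) a = pone K.
Proof. by apply: functional_extensionality_dep => i; rewrite /pmul tg_mulVg. Qed.
Lemma pmulgV (a : PG K) : pmul a (Defs.pinv a) = pone K.
Proof. by apply: functional_extensionality_dep => i; rewrite /pmul tg_mulgV. Qed.

Lemma pmulr_cont (c : PG K) : continuous (fun q : PG K => pmul q c).
Proof.
apply: continuous_into_prod => i q.
apply: (@continuous_comp _ _ _ (fun f : PG K => f i) (fun x => tg_mul x (c i))).
  exact: proj_cont.
exact: tg_mulr_cont.
Qed.

Lemma pmull_cont (c : PG K) : continuous (fun q : PG K => pmul c q).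
Proof.
apply: continuous_into_prod => i q.
apply: (@continuous_comp _ _ _ (fun f : PG K => f i) (fun x => tg_mul (c i) x)).
  exact: proj_cont.
exact: tg_mull_cont.
Qed.
End PGroup.

Section Restr.
Variables (S : Type) (Gs : S -> topGroup).

Definition ext (S' : set S) (q : PG (restr Gs S')) : PG Gs :=
  fun s => match pselect (S' s) with
           | left h => q (exist _ s h)
           | right _ => tg_one (Gs s) end.

Lemma ext_cont S' : continuous (@ext S').
Proof.
apply: continuous_into_prod => s; rewrite /ext.
case: (pselect (S' s)) => [h|_].
  exact: (@proj_cont _ (fun i => tg_car (restr Gs S' i)) (exist _ s h)).
exact: cst_continuous.
Qed.

Lemma ext_prS S' (h : PG Gs) s : S' s -> ext (prS Gs S' h) s = h s.
Proof. by move=> Hs; rewrite /ext; case: (pselect (S' s)). Qed.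

Lemma ext_one S' s : ext (pone (restr Gs S')) s = pone Gs s.
Proof. by rewrite /ext; case: (pselect (S' s)). Qed.

Lemma basic_eq (l : seq {i : S & set (Gs i)}) (f g : PG Gs) :
  (forall p, List.In p l -> f (projT1 p) = g (projT1 p)) -> basic l f -> basic l g.
Proof. by move=> H bf p lp; rewrite -H //; exact: bf. Qed.

Lemma control (S' : set S) (W : set (PG Gs)) (l : seq {i : S & set (Gs i)}) :
  (forall p, List.In p l -> S' (projT1 p) /\ open (projT2 p)) ->
  basic l (pone Gs) -> basic l `<=` W ->
  exists W' : set (PG (restr Gs S')),
    [/\ open W', W' (pone _) & forall h, W' (prS Gs S' h) -> W h].
Proof.
move=> Hl b1 bW; exists (@ext S' @^-1` basic l); split.
- apply: (proj1 (continuousP _) (@ext_cont S')); apply: basic_open => p lp.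
  exact: (Hl p lp).2.
- apply: basic_eq b1 => p lp; by rewrite ext_one.
- move=> h bh; apply: bW; apply: basic_eq bh => p lp.
  by rewrite ext_prS //; exact: (Hl p lp).1.
Qed.
End Restr.


Section JCsec.
Variables (S : Type) (Gs : S -> topGroup) (G : set (PG Gs)) (X : topologicalType)
  (alpha : PG Gs -> X -> X).
Hypothesis HG : Gspace G alpha.

Lemma JC (g : PG Gs) (x : X) (O : set X) : G g -> nbhs (alpha g x) O ->
  exists W : set (PG Gs), [/\ open W, W g &
    exists2 V : set X, nbhs x V & forall h y, G h -> W h -> V y -> O (alpha h y)].
Proof.
move=> Gg nO; case: HG => _ Hc _ _.
move/subspace_continuousP: Hc => Hc.
have := Hc (g, x) (conj Gg I) O nO.
move=> [[P Q] /= [nP nQ] PQ].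
move: nP; rewrite [nbhs g]nbhsE => -[B [oB Bg] BP].
exists B; split => //; exists Q; first exact: nQ.
move=> h y Gh Bh Qy.
exact: (PQ (h, y) (conj (BP _ Bh) Qy) (conj Gh I)).
Qed.

Lemma alpha_cont (g : PG Gs) : G g -> continuous (alpha g).
Proof.
move=> Gg x O nO; have [W [oW Wg [V nV HV]]] := JC Gg nO.
apply: filterS nV => y Vy; exact: HV.
Qed.

End JCsec.

Section Core.
Variables (S : Type) (Gs : S -> topGroup) (G : set (PG Gs)) (X : topologicalType)
  (alpha : PG Gs -> X -> X).
Hypothesis HG : Gspace G alpha.
Hypothesis T1 : accessible_space X.
Variable S' : set S.
Local Notation prS' := (prS Gs S').
Hypothesis HP : forall (z : X) (O : set X), nbhs z O ->
  exists W' : set (PG (restr Gs S')), [/\ open W', W' (pone _) &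
    exists2 V : set X, nbhs z V &
      forall h y, G h -> W' (prS' h) -> V y -> O (alpha h y)].

Lemma kernel g : G g -> prS' g = pone _ -> forall x, alpha g x = x.
Proof.
move=> Gg pg x; case: (eqVneq (alpha g x) x) => // ne.
have [A [oA xA yA]] : exists A : set X, [/\ open A, x \in A & alpha g x \in ~` A].
  by apply: T1; rewrite eq_sym.
have [W' [oW W1 [V nV HV]]] := HP (open_nbhs_nbhs (conj oA (set_mem xA))).
have W'g : W' (prS' g) by rewrite pg.
have := HV g x Gg W'g (nbhs_singleton nV).
by move: yA; rewrite inE.
Qed.

Lemma alpha_eq g g' x : G g -> G g' -> prS' g = prS' g' -> alpha g x = alpha g' x.
Proof.
case: HG => [[G1 GM GV] _ A1 AM] Gg Gg' e.
pose m := pmul (Defs.pinv g) g'.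
have Gm : G m by apply: GM => //; exact: GV.
have pm : prS' m = pone _.
  have -> : prS' m = pmul (Defs.pinv (prS' g)) (prS' g') by [].
  by rewrite e pmulVg.
have -> : g' = pmul g m by rewrite /m pmulA pmulgV pmul1g.
by rewrite -AM // (kernel Gm pm).
Qed.

Definition gamma (p : PG (restr Gs S')) (x : X) : X :=
  match pselect (exists g, G g /\ prS' g = p) with
  | left e => alpha (proj1_sig (cid e)) x
  | right _ => x end.

Lemma gammaE g x : G g -> gamma (prS' g) x = alpha g x.
Proof.
move=> Gg; rewrite /gamma; case: pselect => [e|ne]; last first.
  by exfalso; apply: ne; exists g.
case: (cid e) => g' [Gg' e'] /=; exact: alpha_eq.
Qed.

Lemma prS_cont : continuous prS'.
Proof.
apply: continuous_into_prod => i.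
exact: (@proj_cont _ (fun s => tg_car (Gs s)) (proj1_sig i)).
Qed.

Lemma core : Gspace (prS' @` G) gamma /\
  equivariant_pair G (prS' @` G) alpha gamma prS'.
Proof.
have HG' := HG; case: HG' => [[G1 GM GV] Hc A1 AM].
split; last first.
  split.
  - exact: continuous_subspaceT prS_cont.
  - by move=> g Gg; exists g.
  - by [].
  - by move=> g x Gg; rewrite gammaE.
split.
- split.
  + by exists (pone Gs).
  + by move=> _ _ [a Ga <-] [b Gb <-]; exists (pmul a b) => //; apply: GM.
  + by move=> _ [a Ga <-]; exists (Defs.pinv a) => //; apply: GV.
- apply/subspace_continuousP => -[p z] [[g Gg pg] _] O; simpl in pg; subst p; simpl.
  rewrite /from_subspace /= gammaE // => nO.
  have [W' [oW' W'1 [V nV HV]]] := HP nO.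
  have nV2 : nbhs z (alpha g @^-1` V) := alpha_cont HG Gg nV.
  pose P := (fun q => pmul q (prS' (Defs.pinv g))) @^-1` W'.
  have oP : open P by apply: (proj1 (continuousP _) (@pmulr_cont _ _ _)).
  have Pg : P (prS' g).
    rewrite /P /=.
    have -> : pmul (prS' g) (prS' (Defs.pinv g)) = pmul (prS' g) (Defs.pinv (prS' g)) by [].
    by rewrite pmulgV.
  exists (P, alpha g @^-1` V) => /=.
    by split => //; exact: open_nbhs_nbhs.
  move=> [q y] /= [Pq Vy] [[h Gh hq] _]; simpl in hq; subst q; simpl.
  rewrite gammaE //.
  have -> : h = pmul (pmul h (Defs.pinv g)) g by rewrite -pmulA pmulVg pmulg1.
  rewrite -AM //; last by apply: GM => //; exact: GV.
  apply: HV => //; first by apply: GM => //; exact: GV.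
- move=> x; have -> : pone (restr Gs S') = prS' (pone Gs) by [].
  by rewrite gammaE // A1.
- move=> _ _ x [g Gg <-] [h Hh <-].
  rewrite !gammaE // AM // -gammaE //; last by apply: GM.
Qed.
End Core.


Section Card.
Variable T : pointedType.
Hypothesis Tinf : infinite_set [set: T].

Definition fam (F : set (set T)) :=
  (forall A, F A -> [set: nat] #= A) /\
  (forall A B, F A -> F B -> A <> B -> A `&` B = set0).

Lemma fam_max : exists M, fam M /\ forall F, M `<` F -> ~ fam F.
Proof.
apply: Zorn_bigcup => C CP Ctot; rewrite /fam; split.
  by move=> A [F CF FA]; exact: (CP F CF).1.
move=> A B [F CF FA] [F' CF' F'B] AB.
have [FF'|F'F] := Ctot F F' CF CF'.
  exact: (CP F' CF').2 _ _ (FF' _ FA) F'B AB.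
exact: (CP F CF).2 _ _ FA (F'F _ F'B) AB.
Qed.

Lemma disj_contra (A B : set T) x : A `&` B = set0 -> A x -> B x -> False.
Proof. by move=> AB Ax Bx; have : (A `&` B) x by []; rewrite AB. Qed.

Lemma nat_prod_inj : exists f : T * nat -> T, injective f.
Proof.
have [M [[Mc Md] Mmax]] := fam_max.
pose R := ~` \bigcup_(A in M) A.
have Rfin : finite_set R.
  apply: contrapT => /infiniteP /pcard_leP /injfunPex [f fR finj].
  pose D := f @` [set: nat].
  have DR : D `<=` R by move=> _ [n _ <-]; exact: fR.
  apply: (Mmax (M `|` [set D])); last split.
  - split; first by move=> A MA; left.
    move=> sub; have MD := sub D (or_intror erefl).
    have D0 : D (f 0%N) by exists 0%N.
    by apply: (DR _ D0); exists D.
  - move=> A [MA|->]; first exact: Mc.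
    exact: card_esym (inj_card_eq finj).
  - have dD A : M A -> A `&` D = set0.
      move=> MA; rewrite -subset0 => x [Ax Dx].
      by apply: (DR _ Dx); exists A.
    move=> A B [MA|->] [MB|->] AB //.
    + exact: Md.
    + exact: dD.
    + by rewrite setIC; exact: dD.
have [A0 MA0] : exists A0, M A0.
  apply: contrapT => nM; apply: Tinf; apply: sub_finite_set Rfin.
  by move=> x _ [A MA _]; apply: nM; exists A.
have exE : forall A, M A -> exists e : nat -> T, set_bij [set: nat] A e.
  by move=> A /Mc /pcard_eqP /bijPex.
pose e A : nat -> T := match pselect (M A) with
  | left h => sval (cid (exE A h)) | right _ => fun _ => point end.
have eP A : M A -> set_bij [set: nat] A (e A).
  by move=> MA; rewrite /e; case: pselect => // h; exact: (svalP (cid _)).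
have einj A : M A -> injective (e A).
  by move=> MA n n' E; case: (eP A MA) => _ ei _; apply: ei => //; exact: mem_set.
have eA A n : M A -> A (e A n).
  by move=> MA; case: (eP A MA) => ef _ _; exact: ef.
have sameA A A' n n' : M A -> M A' -> e A n = e A' n' -> A = A'.
  move=> MA MA' E; apply: contrapT => ne.
  apply: (disj_contra (Md _ _ MA MA' ne) (eA A n MA)); rewrite E; exact: eA.
have [r rinj] : exists r : T -> nat, {in R &, injective r}.
  exact/pcard_injP/finite_set_countable.
have [c cinj] : exists c : nat * nat -> nat, {in [set: nat * nat] &, injective c}.
  by have := card_nat2; rewrite card_eq_le => /andP[/pcard_injP].
have cinj' : injective c by move=> x y E; apply: cinj => //; exact: mem_set.
pose f (tm : T * nat) : T :=
  match pselect (exists An : set T * nat, M An.1 /\ e An.1 An.2 = tm.1) with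
  | left h => e (sval (cid h)).1 (c ((sval (cid h)).2, tm.2)).*2
  | right _ => e A0 (c (r tm.1, tm.2)).*2.+1 end.
exists f => -[t m] [t' m']; rewrite /f /=.
case: pselect => [h|nh]; case: pselect => [h'|nh'].
- case: (cid h) => -[A n] /= [MA eAn]; case: (cid h') => -[A' n'] /= [MA' eAn'] E.
  have AA := sameA _ _ _ _ MA MA' E; subst A'.
  move/(einj _ MA)/double_inj/cinj': E => -[nn ->].
  by rewrite -eAn -eAn' nn.
- case: (cid h) => -[A n] /= [MA eAn] E.
  have AA := sameA _ _ _ _ MA MA0 E; subst A.
  by move/(einj _ MA)/(congr1 odd): E; rewrite /= !odd_double.
- case: (cid h') => -[A n] /= [MA eAn] E.
  have AA := sameA _ _ _ _ MA0 MA E; subst A.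
  by move/(einj _ MA)/(congr1 odd): E; rewrite /= !odd_double.
- move=> /(einj _ MA0) [] /double_inj /cinj' [rt <-].
  have inR u : ~ (exists An : set T * nat, M An.1 /\ e An.1 An.2 = u) -> R u.
    move=> nu [A MA Au]; apply: nu.
    case: (eP A MA) => _ _ /(_ u Au) [n _ enu].
    by exists (A, n).
  by rewrite (rinj t t' (mem_set (inR _ nh)) (mem_set (inR _ nh')) rt).
Qed.
End Card.

Lemma card_lists (T : pointedType) (S A : Type) (B : set A) (L : A -> seq S) :
  infinite_set [set: T] -> B #<= [set: T] ->
  [set s | exists2 b, B b & List.In s (L b)] #<= [set: T].
Proof.
move=> Tinf /pcard_injP [i iinj].
have [f finj] := nat_prod_inj Tinf.
apply/pcard_injP.
pose g (s : S) : T :=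
  match pselect (exists bn : A * nat, B bn.1 /\ List.nth_error (L bn.1) bn.2 = Some s) with
  | left h => f (i (sval (cid h)).1, (sval (cid h)).2)
  | right _ => point end.
have gE s : (exists2 b, B b & List.In s (L b)) ->
    exists bn : A * nat, [/\ B bn.1, List.nth_error (L bn.1) bn.2 = Some s &
      g s = f (i bn.1, bn.2)].
  move=> [b Bb Ls]; rewrite /g; case: pselect => [h|nh]; last first.
    exfalso; apply: nh; have [n Hn] := List.In_nth_error _ _ Ls.
    by exists (b, n).
  case: (cid h) => -[b' n'] /= [Bb' Hn']; by exists (b', n').
exists g => s s' /set_mem Ss /set_mem Ss'.
have [[b n] [Bb Hn ->]] := gE s Ss; have [[b' n'] [Bb' Hn' ->]] := gE s' Ss'.
move/finj => [/iinj bb nn]; move: Hn'; rewrite /= -nn -bb ?Hn; first by case.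
- exact: mem_set.
- exact: mem_set.
Qed.


Lemma conj_cancel (I : Type) (K : I -> topGroup) (h k : PG K) :
  pmul k (pmul (pmul (Defs.pinv k) (pmul h k)) (Defs.pinv k)) = h.
Proof. by rewrite !pmulA pmulgV pmul1g -pmulA pmulgV pmulg1. Qed.

Lemma conj_cancel' (I : Type) (K : I -> topGroup) (h k : PG K) :
  pmul (pmul k (pmul (Defs.pinv k) (pmul h k))) (Defs.pinv k) = h.
Proof. by rewrite pmulA pmulgV pmul1g -pmulA pmulgV pmulg1. Qed.

Lemma in_map_projT1 (S : Type) (Gs : S -> topGroup) (l : seq {i : S & set (Gs i)}) p :
  List.In p l -> List.In (projT1 p) (map (@projT1 _ _) l).
Proof. by move=> lp; apply: List.in_map. Qed.

Section CaseA.
Variables (tau : pointedType) (S : Type) (Gs : S -> topGroup)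
    (G : set (PG Gs)) (X : topologicalType) (alpha : PG Gs -> X -> X).
Hypothesis Tinf : infinite_set [set: tau].
Hypothesis T1X : accessible_space X.
Hypothesis HG : Gspace G alpha.
Hypothesis Htr : transitive_action G alpha.
Hypothesis Hchi : character_le X tau.

Lemma caseA : exists (S' : set S) (gamma : PG (restr Gs S') -> X -> X),
      [/\ S' #<= [set: tau],
          Gspace (prS Gs S' @` G) gamma,
          transitive_action (prS Gs S' @` G) gamma
        & equivariant_pair G (prS Gs S' @` G) alpha gamma (prS Gs S')].
Proof.
have HG' := HG; case: HG' => [[G1 GM GV] Hc A1 AM].
have [x0|nX] := pselect (exists x : X, True); last first.
  pose S' : set S := set0.
  have HP : forall (z : X) (O : set X), nbhs z O ->
    exists W' : set (PG (restr Gs S')), [/\ open W', W' (pone _) &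
      exists2 V : set X, nbhs z V &
        forall h y, G h -> W' (prS Gs S' h) -> V y -> O (alpha h y)].
    by move=> z; exfalso; apply: nX; exists z.
  have [HG2 EP] := core HG T1X HP.
  exists S', (@gamma _ _ G _ alpha S'); split => //.
  by move=> x; exfalso; apply: nX; exists x.
case: x0 => x0 _.
have [B [Bcard BU Bbase]] := Hchi x0.
have /choice [L HL] : forall U : set X, exists l : seq {i : S & set (Gs i)},
    B U -> [/\ (forall p, List.In p l -> open (projT2 p)), basic l (pone Gs) &
      exists2 V : set X, nbhs x0 V &
        forall h y, G h -> basic l h -> V y -> U (alpha h y)].
  move=> U; have [BUU|nBU] := pselect (B U); last by exists [::].
  have [oU Ux0] := BU U BUU.
  have nU : nbhs (alpha (pone Gs) x0) U by rewrite A1; exact: open_nbhs_nbhs.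
  have [W [oW W1 [V nV HV]]] := JC HG G1 nU.
  have [l [lH lW]] := prod_nbhs_basic (open_nbhs_nbhs (conj oW W1)).
  exists l => _; split.
  - by move=> p lp; exact: (lH p lp).1.
  - by move=> p lp; exact: (lH p lp).2.
  - exists V => // h y Gh bh Vy; apply: HV => //; exact: lW.
pose S' : set S := [set s | exists2 U, B U & List.In s (map (@projT1 _ _) (L U))].
have S'card : S' #<= [set: tau] by apply: card_lists.
have HP : forall (z : X) (O : set X), nbhs z O ->
    exists W' : set (PG (restr Gs S')), [/\ open W', W' (pone _) &
      exists2 V : set X, nbhs z V &
        forall h y, G h -> W' (prS Gs S' h) -> V y -> O (alpha h y)].
  move=> z O nO.
  have [k [Gk kz]] := Htr x0 z.
  have nO' : nbhs x0 (alpha k @^-1` O).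
    by apply: (alpha_cont HG Gk); rewrite kz.
  have [U BUU UO] := Bbase _ nO'.
  have [lo b1 [V nV HV]] := HL U BUU.
  have [W'0 [oW0 W01 HW0]] : exists W' : set (PG (restr Gs S')),
      [/\ open W', W' (pone _) & forall h, W' (prS Gs S' h) -> basic (L U) h].
    apply: (control (l := L U)) => //.
    move=> p lp; split; last exact: lo.
    by rewrite /S'; exists U => //; exact: in_map_projT1.
  pose pk := prS Gs S' k.
  exists ((fun q => pmul q pk) @^-1` ((fun q => pmul (Defs.pinv pk) q) @^-1` W'0)).
  split.
  - apply: (proj1 (continuousP _) (@pmulr_cont _ _ pk)).
    exact: (proj1 (continuousP _) (@pmull_cont _ _ (Defs.pinv pk))).
  - by rewrite /= pmul1g pmulVg.
  - have GVk := GV _ Gk.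
    exists (alpha (Defs.pinv k) @^-1` V).
      apply: (alpha_cont HG GVk).
      by rewrite -kz AM // pmulVg A1.
    move=> h y Gh /= Wh Vy.
    have Gm : G (pmul (Defs.pinv k) (pmul h k)) := (GM _ _ GVk (GM _ _ Gh Gk)).
    have := HV _ _ Gm (HW0 _ Wh) Vy => /UO /=.
    by rewrite AM // AM //; [rewrite conj_cancel' | exact: (GM _ _ Gk Gm)].
have [HG2 EP] := core HG T1X HP.
exists S', (@gamma _ _ G _ alpha S'); split => //.
move=> x y; have [g [Gg gxy]] := Htr x y.
exists (prS Gs S' g); split; first by exists g.
by case: EP => _ _ _ <-.
Qed.
End CaseA.

Section CaseB.
Variables (tau : pointedType) (S : Type) (Gs : S -> topGroup)
    (G : set (PG Gs)) (X : topologicalType) (alpha : PG Gs -> X -> X)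
    (UU : set (set (set X))).
Hypothesis Tinf : infinite_set [set: tau].
Hypothesis T1X : accessible_space X.
Hypothesis HG : Gspace G alpha.
Hypothesis Heq : equiuniformity G alpha UU.
Hypothesis Hw : weight_le UU tau.

Let Z (W : set (PG Gs)) (V : set X) :=
  [set z | exists g y, [/\ (G `&` W) g, V y & z = alpha g y]].

Lemma caseB : exists (S' : set S) (gamma : PG (restr Gs S') -> X -> X),
      [/\ S' #<= [set: tau],
          Gspace (prS Gs S' @` G) gamma,
          equiuniformity (prS Gs S' @` G) gamma UU
        & equivariant_pair G (prS Gs S' @` G) alpha gamma (prS Gs S')].
Proof.
have HG' := HG; case: HG' => [[G1 GM GV] Hc A1 AM].
case: Heq => HU Hsat Hbd.
have HU' := HU; case: HU' => [[_ Hcov _ _ _] Hloc].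
case: Hw => B [BU Bcard Bref].
have /choice [L HL] : forall b : set (set X), exists lv : seq {i : S & set (Gs i)} * set (set X),
    B b -> [/\ (forall p, List.In p lv.1 -> open (projT2 p)), basic lv.1 (pone Gs),
      UU lv.2 & refines [set Z (basic lv.1) V | V in lv.2] b].
  move=> b; have [Bb|nBb] := pselect (B b); last by exists ([::], set0).
  have [W [oW W1 [v Uv Hv]]] := Hbd b (BU b Bb).
  have [l [lH lW]] := prod_nbhs_basic (open_nbhs_nbhs (conj oW W1)).
  exists (l, v) => _; split => //=.
  - by move=> p lp; exact: (lH p lp).1.
  - by move=> p lp; exact: (lH p lp).2.
  - move=> _ [V vV <-]; have [U bU ZU] := Hv _ (ex_intro2 _ _ V vV erefl).
    exists U => // z [g [y [[Gg bg] Vy ->]]]; apply: ZU.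
    by exists g, y; split => //; split => //; exact: lW.
pose S' : set S := [set s | exists2 b, B b & List.In s (map (@projT1 _ _) (L b).1)].
have S'card : S' #<= [set: tau] by apply: card_lists.
have ctrl b : B b -> exists W' : set (PG (restr Gs S')),
      [/\ open W', W' (pone _) & forall h, W' (prS Gs S' h) -> basic (L b).1 h].
  move=> Bb; have [lo b1 _ _] := HL b Bb.
  apply: (control (l := (L b).1)) => //.
  move=> p lp; split; last exact: lo.
  by rewrite /S'; exists b => //; exact: in_map_projT1.
have HP : forall (z : X) (O : set X), nbhs z O ->
    exists W' : set (PG (restr Gs S')), [/\ open W', W' (pone _) &
      exists2 V : set X, nbhs z V &
        forall h y, G h -> W' (prS Gs S' h) -> V y -> O (alpha h y)].
  move=> z O nO.
  have [u Uu uO] := Hloc z O nO.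
  have [b Bb bu] := Bref u Uu.
  have [lo b1 Uv vref] := HL b Bb.
  have [W'0 [oW0 W01 HW0]] := ctrl b Bb.
  exists W'0; split => //.
  have [vo vcov] := Hcov _ Uv.
  have : [set: X] z by [].
  rewrite -vcov => -[V0 vV0 V0z].
  exists V0; first exact: open_nbhs_nbhs (conj (vo _ vV0) V0z).
  move=> h y Gh Wh V0y.
  have [U1 bU1 ZU1] := vref _ (ex_intro2 _ _ V0 vV0 erefl).
  have [U2 uU2 U12] := bu _ bU1.
  apply: uO; exists U2; last first.
    by apply/U12/ZU1; exists h, y; split => //; split => //; exact: HW0.
  split => //; exists z; split => //.
  by apply/U12/ZU1; exists (pone Gs), z; split => //.
have [HG2 EP] := core HG T1X HP.
have gE h : G h -> @gamma _ _ G _ alpha S' (prS Gs S' h) = alpha h.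
  move=> Gh; apply: funext => x; by case: EP => _ _ _ ->.
exists S', (@gamma _ _ G _ alpha S'); split => //; split => //.
- move=> u _ Uu [h Gh <-]; rewrite gE //; exact: Hsat.
- move=> u Uu.
  have [b Bb bu] := Bref u Uu.
  have [lo b1 Uv vref] := HL b Bb.
  have [W'0 [oW0 W01 HW0]] := ctrl b Bb.
  exists W'0; split => //; exists (L b).2 => //.
  move=> _ [V vV <-].
  have [U1 bU1 ZU1] := vref _ (ex_intro2 _ _ V vV erefl).
  have [U2 uU2 U12] := bu _ bU1.
  exists U2 => // z [q [y [[[h Gh hq] Wq] Vy ->]]].
  subst q; rewrite gE //; apply/U12/ZU1.
  by exists h, y; split => //; split => //; exact: HW0.
Qed.
End CaseB.

Unset Implicit Arguments.
Set Strict Implicit.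

Theorem proposition3p2 (tau : Type) (S : Type) (Gs : S -> topGroup)
    (G : set (PG Gs)) (X : topologicalType) (alpha : PG Gs -> X -> X)
    (UU : set (set (set X))) :
  infinite_set [set: tau] ->
  (forall s, tychonoff_space (Gs s)) -> tychonoff_space X ->
  Gspace G alpha ->
  (* case (a) *)
  ((transitive_action G alpha /\ character_le X tau) ->
    exists (S' : set S) (gamma : PG (restr Gs S') -> X -> X),
      [/\ S' #<= [set: tau],
          Gspace (prS Gs S' @` G) gamma,
          transitive_action (prS Gs S' @` G) gamma
        & equivariant_pair G (prS Gs S' @` G) alpha gamma (prS Gs S')]) /\
  (* case (b) *)
  ((G_tychonoff G alpha /\ equiuniformity G alpha UU /\ weight_le UU tau) ->
    exists (S' : set S) (gamma : PG (restr Gs S') -> X -> X),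
      [/\ S' #<= [set: tau],
          Gspace (prS Gs S' @` G) gamma,
          equiuniformity (prS Gs S' @` G) gamma UU
        & equivariant_pair G (prS Gs S' @` G) alpha gamma (prS Gs S')]).
Proof.
move: tau; elim/Ppointed => tau Tinf _ TX HG.
  exfalso; apply: Tinf; rewrite (empty_eq0 [set: tau]); exact: finite_set0.
split; first by move=> [Htr Hchi]; exact: caseA Tinf TX.1 HG Htr Hchi.
by move=> [_ [Heq Hw]]; exact: caseB Tinf TX.1 HG Heq Hw.
Qed.
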